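(* In the setting described in the context, for every edge state $\mathcal S=(S,\ell)$ with $S\subseteq I\times E$ and $\ell\in\{0,\dots,K\}^E$, the set $\Lambda(\mathcal S)=\{\lambda\ge0:\mathcal S(\lambda)=\mathcal S\}$ is convex.
   Context: Let $G=(V,E)$ be a directed graph and $I$ a finite set of commodities; commodity $i$ has source $s_i$, sink $t_i$, demand $d_i>0$. Flows are $x=(x_{i,e})\in\mathbb{R}^{I\times E}_{\ge0}$, feasible if for each $i$ they form an $s_i$–$t_i$ flow of value $d_i$; edge loads $x_e=\sum_ix_{i,e}$. The cost of edge $e$ under price $\lambda\ge0$ is $c^\lambda_e(x_e)=a_{e,k}x_e+b_{e,k}+g_e\lambda$ for $x_e\in[\sigma_{e,k},\sigma_{e,k+1})$, $k\in\{0,\dots,K\}$, with $0=\sigma_{e,0}<\dots<\sigma_{e,K}<\sigma_{e,K+1}=\infty$, $a_{e,k}>0$, $b_{e,k}\ge0$, $g_e\ge0$, such that $c^\lambda_e$ is continuous and strictly increasing; path costs are sums of edge costs; $\mathrm{WE}(\lambda)$ is the set of Wardrop equilibria (feasible flows using only minimum-cost paths per commodity). For each $\lambda$ the equilibrium edge loads $x_e$ are unique. Let $\phi_{i,v}(\lambda)$ be the length of a shortest $s_i$–$v$ path w.r.t. edge lengths $c^\lambda_e(x_e)$ for equilibrium loads $x_e$. The active support is $S(\lambda)=\{(i,e)\in I\times E: e=vw,\ c^\lambda_e(x_e)=\phi_{i,w}(\lambda)-\phi_{i,v}(\lambda)\}$, the vector of active function parts $\ell(\lambda)\in\{0,\dots,K\}^E$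 has $\ell_e$ the index with $x_e\in[\sigma_{e,\ell_e},\sigma_{e,\ell_e+1})$, and the edge state is $\mathcal S(\lambda)=(S(\lambda),\ell(\lambda))$. *)

(* Defs.v *)
From HB Require Import structures.
From mathcomp Require Import all_boot all_order all_algebra.
From mathcomp Require Import reals.

Set Implicit Arguments.
Unset Strict Implicit.
Unset Printing Implicit Defensive.

Import Order.TTheory GRing.Theory Num.Theory.
Local Open Scope ring_scope.

(* Edge cost functions are
   piecewise affine with breakpoints [sigma e 0 = 0 < ... < sigma e K]
   (and sigma_{e,K+1} = +oo), slopes [a e k], offsets [b e k] and
   price sensitivity [g e], for k = 0..K. *)

Section Network.
Variable R : realType.
Variables (V E I : finType) (tail head : E -> V).
Variables (src snk : I -> V) (dem : I -> R).
Variable K : nat.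
Variables (sigma a b : E -> nat -> R) (g : E -> R).

(* index k in {0..K} of the function part active at load x:
   the largest k with sigma e k <= x (for x >= 0 this is the unique k with
   x in [sigma_{e,k}, sigma_{e,k+1})). *)
Definition piece (e : E) (x : R) : 'I_K.+1 :=
  [arg max_(k > ord0 | sigma e k <= x) (k : nat)].

Definition cost (lam : R) (e : E) (x : R) : R :=
  a e (piece e x) * x + b e (piece e x) + g e * lam.

Definition load (x : I -> E -> R) (e : E) : R := \sum_(i : I) x i e.

Definition feasible (x : I -> E -> R) : Prop :=
  (forall i e, 0 <= x i e) /\
  (forall i v,
     \sum_(e | tail e == v) x i e - \sum_(e | head e == v) x i e
     = (if v == src i then dem i else 0) - (if v == snk i then dem i else 0)).

Fixpoint is_walk (u v : V) (p : seq E) : bool :=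
  match p with
  | [::] => u == v
  | e :: p' => (tail e == u) && is_walk (head e) v p'
  end.

Definition plen (c : E -> R) (p : seq E) : R := \sum_(e <- p) c e.

Definition is_dist (c : E -> R) (u v : V) (r : R) : Prop :=
  (exists p, is_walk u v p /\ plen c p = r) /\
  (forall p, is_walk u v p -> r <= plen c p).

Definition edge_costs (lam : R) (x : I -> E -> R) : E -> R :=
  fun e => cost lam e (load x e).

Definition tight (lam : R) (x : I -> E -> R) (i : I) (e : E) : Prop :=
  exists rv rw,
    is_dist (edge_costs lam x) (src i) (tail e) rv /\
    is_dist (edge_costs lam x) (src i) (head e) rw /\
    edge_costs lam x e = rw - rv.

(* Wardrop equilibrium: feasible, and commodity i only uses edges lying on
   shortest s_i-paths (potential characterisation of "only minimum-cost
   paths are used"). *)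
Definition is_WE (lam : R) (x : I -> E -> R) : Prop :=
  feasible x /\ forall i e, 0 < x i e -> tight lam x i e.

Definition has_state (lam : R) (x : I -> E -> R)
    (S : {set I * E}) (ell : {ffun E -> 'I_K.+1}) : Prop :=
  (forall i e, (i, e) \in S <-> tight lam x i e) /\
  (forall e, ell e = piece e (load x e)).

Definition Lambda (S : {set I * E}) (ell : {ffun E -> 'I_K.+1}) (lam : R)
  : Prop :=
  0 <= lam /\ exists x, is_WE lam x /\ has_state lam x S ell.

End Network.

(* Main.v *)
Require Import Defs.
From HB Require Import structures.
From mathcomp Require Import all_boot all_order all_algebra.
From mathcomp Require Import reals ring lra.
From Stdlib Require Import FunctionalExtensionality.
Import Order.TTheory GRing.Theory Num.Theory.
Set Implicit Arguments.
Unset Strict Implicit.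
Unset Printing Implicit Defensive.
Local Open Scope ring_scope.

Section Aux.
Variable R : realType.
Variables (V E : finType) (tail head : E -> V).
Notation walk := (is_walk tail head).
Notation dist := (@is_dist R V E tail head).
Implicit Types (c : E -> R) (p q : seq E) (u v w s : V) (f g e : E).

Definition tightc (c : E -> R) (s : V) (e : E) : Prop :=
  exists rv rw, dist c s (tail e) rv /\ dist c s (head e) rw /\ c e = rw - rv.

Lemma walk_cat u w v p1 p2 : walk u w p1 -> walk w v p2 -> walk u v (p1 ++ p2).
Proof.
elim: p1 u => [|f p IH] u /=; first by move/eqP->.
by case/andP=> -> H1 H2; rewrite (IH _ H1 H2).
Qed.

Lemma walk_catP u v p1 p2 : walk u v (p1 ++ p2) -> exists w, walk u w p1 /\ walk w v p2.
Proof.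
elim: p1 u => [|f p IH] u /=; first by move=> H; exists u; rewrite eqxx.
by case/andP=> -> /IH [w [H1 H2]]; exists w.
Qed.

Lemma plen_cat c p1 p2 : plen c (p1 ++ p2) = plen c p1 + plen c p2.
Proof. by rewrite /plen big_cat. Qed.

Lemma plen_cons c f p : plen c (f :: p) = c f + plen c p.
Proof. by rewrite /plen big_cons. Qed.

Lemma plen_nil c : plen c [::] = 0.
Proof. by rewrite /plen big_nil. Qed.

Lemma plen_ge0 c p : (forall e, 0 <= c e) -> 0 <= plen c p.
Proof. by move=> H; rewrite /plen; apply: sumr_ge0. Qed.

Lemma dist_uniq c u v r r' : dist c u v r -> dist c u v r' -> r = r'.
Proof.
move=> [[p [Hp <-]] H1] [[p' [Hp' <-]] H2].
by apply/eqP; rewrite eq_le H1 // H2.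
Qed.

Lemma dist_self c s : (forall e, 0 <= c e) -> dist c s s 0.
Proof.
move=> H; split; first by exists [::]; rewrite /= eqxx plen_nil.
by move=> p _; apply: plen_ge0.
Qed.

Lemma tight_on_shortest c s v p f : walk s v p ->
  (forall q, walk s v q -> plen c p <= plen c q) -> f \in p -> tightc c s f.
Proof.
move=> Hp Hmin /splitPr Hs; move: Hp Hmin; case: Hs => q q' Hp Hmin.
have [w [Hq Hq']] := walk_catP Hp.
move: Hq' => /= /andP [/eqP Htf Hq'].
exists (plen c q), (plen c q + c f); split; last split.
- split; first by exists q; rewrite Htf.
  move=> q2 Hq2.
  have := Hmin (q2 ++ f :: q') (walk_cat Hq2 (_ : walk (tail f) v (f :: q'))).
  rewrite !plen_cat !plen_cons /= eqxx Hq' => /(_ isT).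
  by rewrite lerD2r.
- split.
    exists (q ++ [:: f]); split; last by rewrite plen_cat plen_cons plen_nil addr0.
    by apply: walk_cat Hq _; rewrite /= Htf !eqxx.
  move=> q2 Hq2.
  have := Hmin (q2 ++ q') (walk_cat Hq2 Hq').
  by rewrite !plen_cat !plen_cons addrA lerD2r.
- by rewrite addrAC subrr add0r.
Qed.

Lemma dist_tele c s u ru v p : dist c s u ru -> walk u v p ->
  (forall f, f \in p -> tightc c s f) -> dist c s v (ru + plen c p).
Proof.
elim: p u ru => [|f p IH] u ru Hd /=.
  by move/eqP=> <- _; rewrite plen_nil addr0.
case/andP=> /eqP Htf Hw Ht.
have [rv [rw [Hv [Hw' Hc]]]] := Ht f (mem_head _ _).
rewrite Htf in Hv; have Heq := dist_uniq Hv Hd.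
have -> : ru + plen c (f :: p) = (ru + c f) + plen c p by rewrite plen_cons addrA.
apply: IH Hw _ => [|g Hg]; last by apply: Ht; rewrite inE Hg orbT.
by rewrite Hc -Heq addrC subrK.
Qed.

Lemma plen_comb (t : R) c1 c2 p :
  plen (fun e => t * c1 e + (1 - t) * c2 e) p = t * plen c1 p + (1 - t) * plen c2 p.
Proof. by rewrite /plen big_split /= -!mulr_sumr. Qed.

Lemma dist_comb (t : R) c1 c2 s v r1 r2 : 0 <= t <= 1 ->
  (forall e, 0 <= c2 e) -> (forall f, tightc c1 s f -> tightc c2 s f) ->
  dist c1 s v r1 -> dist c2 s v r2 ->
  dist (fun e => t * c1 e + (1 - t) * c2 e) s v (t * r1 + (1 - t) * r2).
Proof.
move=> /andP [t0 t1] Hc2 Himp [[p [Hp Hl]] Hmin1] D2.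
have Ht : forall f, f \in p -> tightc c2 s f.
  move=> f Hf; apply: Himp; apply: (tight_on_shortest Hp) Hf.
  by move=> q Hq; rewrite Hl; apply: Hmin1.
have := dist_tele (dist_self s Hc2) Hp Ht; rewrite add0r => D2'.
have Heq := dist_uniq D2' D2.
split; first by exists p; rewrite plen_comb Hl Heq.
move=> q Hq; rewrite plen_comb; apply: lerD.
  by apply: ler_wpM2l => //; apply: Hmin1.
by apply: ler_wpM2l; [rewrite subr_ge0 | case: D2 => _; apply].
Qed.

Lemma dist_tri c s e rv rw : dist c s (tail e) rv -> dist c s (head e) rw -> rw <= rv + c e.
Proof.
move=> [[p [Hp <-]] _] [_ H]; rewrite -(addr0 (c e)) -(plen_nil c) -plen_cons -plen_cat.
by apply: H; apply: walk_cat Hp _; rewrite /= !eqxx.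
Qed.

Lemma walk_cut c v u : (forall e, 0 <= c e) -> forall w p, walk w v p ->
  uniq (w :: map head p) -> u \in w :: map head p ->
  exists p2, walk u v p2 /\ uniq (u :: map head p2) /\ plen c p2 <= plen c p.
Proof.
move=> Hc w p; elim: p w => [|g p IH] w /=.
  by move=> Hw _; rewrite inE => /eqP ->; exists [::]; rewrite /= Hw.
case/andP=> /eqP Htg Hw Hun; have Hu : uniq (head g :: map head p) by case/andP: Hun.
rewrite inE; case: (eqVneq u w) => [-> _ | _ /= Hin].
  by exists (g :: p); rewrite /= Htg eqxx Hw; split => //.
have [p2 [H1 [H2 H3]]] := IH _ Hw Hu Hin.
exists p2; split => //; split => //.
by rewrite plen_cons (le_trans H3) // lerDr.
Qed.

Lemma walk_simplify c v : (forall e, 0 <= c e) -> forall q u, walk u v q ->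
  exists p, walk u v p /\ uniq (u :: map head p) /\ plen c p <= plen c q.
Proof.
move=> Hc; elim=> [|f q IH] u /=.
  by move=> Hw; exists [::]; rewrite /= Hw.
case/andP=> /eqP Htf Hw.
have [p' [H1 [H2 H3]]] := IH _ Hw.
case: (boolP (u \in head f :: map head p')) => Hin.
  have [p2 [K1 [K2 K3]]] := walk_cut Hc H1 H2 Hin.
  exists p2; split => //; split => //.
  rewrite plen_cons (le_trans K3) // (le_trans H3) // lerDr; exact: Hc.
exists (f :: p'); split; first by rewrite /= Htf eqxx H1.
split; first by rewrite map_cons; apply/andP; split.
by rewrite !plen_cons lerD2l.
Qed.

Fixpoint allseqs (n : nat) : seq (seq E) :=
  if n is n'.+1 then [::] :: [seq f :: p | f <- enum E, p <- allseqs n']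
  else [:: [::]].

Lemma mem_allseqs n p : (size p <= n)%N -> p \in allseqs n.
Proof.
elim: n p => [|n IH] [|f p] //=; rewrite ?inE ?eqxx //.
move=> Hs; apply/orP; right; apply: allpairs_f; first by rewrite mem_enum.
exact: IH.
Qed.

Lemma seq_min c (L : seq (seq E)) (P : pred (seq E)) : has P L ->
  exists p, p \in L /\ P p /\ forall q, q \in L -> P q -> plen c p <= plen c q.
Proof.
elim: L => [|p0 L IH] //=.
case: (boolP (has P L)) => HL.
  have [p [H1 [H2 H3]]] := IH HL => _.
  case HP0 : (P p0); last first.
    exists p; split; first by rewrite inE H1 orbT.
    split => // q; rewrite inE => /orP [/eqP -> | Hq]; first by rewrite HP0.
    exact: H3.
  case: (leP (plen c p) (plen c p0)) => Hle.
    exists p; split; first by rewrite inE H1 orbT.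
    split => // q; rewrite inE => /orP [/eqP -> _ | Hq Pq]; [exact: Hle | exact: H3 Hq Pq].
  exists p0; split; first by rewrite inE eqxx.
  split => // q; rewrite inE => /orP [/eqP -> // | Hq Pq].
  by rewrite (le_trans (ltW Hle)) // H3.
rewrite orbF => HP0; exists p0; split; first by rewrite inE eqxx.
split => // q; rewrite inE => /orP [/eqP -> // | Hq Pq].
by move/hasPn: HL => /(_ q Hq); rewrite Pq.
Qed.

Lemma simple_size u p : uniq (u :: map head p) -> (size p < #|V|)%N.
Proof.
move/card_uniqP => H; have := max_card (mem (u :: map head p)).
by rewrite H /= size_map.
Qed.

Lemma dist_exists c u v q : (forall e, 0 <= c e) -> walk u v q ->
  exists r, dist c u v r.
Proof.
move=> Hc Hq.
have [q0 [Hq0 [Hu0 _]]] := walk_simplify Hc Hq.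
have Hhas : has (walk u v) (allseqs #|V|).
  apply/hasP; exists q0 => //; apply: mem_allseqs; apply: ltnW.
  exact: simple_size Hu0.
have [p [Hp1 [Hp2 Hp3]]] := seq_min c Hhas.
exists (plen c p); split; first by exists p.
move=> q' Hq'.
have [q1 [Hq1 [Hu1 Hl1]]] := walk_simplify Hc Hq'.
apply: le_trans Hl1; apply: Hp3 => //; apply: mem_allseqs; apply: ltnW.
exact: simple_size Hu1.
Qed.
End Aux.

Theorem lemma5p4 (R : realType) (V E I : finType) (tail head : E -> V)
  (src snk : I -> V) (dem : I -> R) (K : nat)
  (sigma a b : E -> nat -> R) (g : E -> R)
  (hdem : forall i, 0 < dem i)
  (hsig0 : forall e, sigma e 0%N = 0)
  (hsig : forall e (k : nat), (k < K)%N -> sigma e k < sigma e k.+1)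
  (ha : forall e (k : nat), (k <= K)%N -> 0 < a e k)
  (hb : forall e (k : nat), (k <= K)%N -> 0 <= b e k)
  (hg : forall e, 0 <= g e)
  (hcont : forall e (k : nat), (0 < k <= K)%N ->
     a e k.-1 * sigma e k + b e k.-1 = a e k * sigma e k + b e k)
  (S : {set I * E}) (ell : {ffun E -> 'I_K.+1}) :
  forall (lam1 lam2 t : R),
    Lambda tail head src snk dem sigma a b g S ell lam1 ->
    Lambda tail head src snk dem sigma a b g S ell lam2 ->
    0 <= t <= 1 ->
    Lambda tail head src snk dem sigma a b g S ell (t * lam1 + (1 - t) * lam2).
Proof.
move=> l1 l2 t [l1ge [x1 [[F1 W1] [S1 P1]]]] [l2ge [x2 [[F2 W2] [S2 P2]]]] /andP[t0 t1].
have t1' : 0 <= 1 - t by rewrite subr_ge0.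
have tt : 0 <= t <= 1 by rewrite t0 t1.
set lam := t * l1 + (1 - t) * l2.
pose x := fun i e => t * x1 i e + (1 - t) * x2 i e.
have Hload e : load x e = t * load x1 e + (1 - t) * load x2 e.
  by rewrite /load /x big_split /= -!mulr_sumr.
have L1 e : 0 <= load x1 e by apply: sumr_ge0 => i _; apply: (proj1 F1).
have L2 e : 0 <= load x2 e by apply: sumr_ge0 => i _; apply: (proj1 F2).
have Hpiece e : piece K sigma e (load x e) = ell e.
  have sp y : 0 <= y -> extremum_spec geq (fun k : 'I_K.+1 => sigma e k <= y)
      (fun k => k : nat) (piece K sigma e y).
    by move=> y0; rewrite /piece; apply: arg_maxnP; rewrite /= hsig0.
  have Hs1 : sigma e (ell e) <= load x1 e /\
      forall j : 'I_K.+1, sigma e j <= load x1 e -> (j <= ell e)%N.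
    by rewrite P1; case: (sp _ (L1 e)) => m Pm Mm; split => // j /Mm.
  have Hs2 : sigma e (ell e) <= load x2 e /\
      forall j : 'I_K.+1, sigma e j <= load x2 e -> (j <= ell e)%N.
    by rewrite P2; case: (sp _ (L2 e)) => m Pm Mm; split => // j /Mm.
  have Hy : 0 <= t * load x1 e + (1 - t) * load x2 e.
    by apply: addr_ge0; apply: mulr_ge0.
  rewrite Hload; case: (sp _ Hy) => m Pm Mm.
  apply/val_inj/eqP; rewrite eqn_leq; apply/andP; split.
    rewrite leqNgt; apply/negP => Hlt.
    have g1 : load x1 e < sigma e m.
      by rewrite ltNge; apply/negP => /(proj2 Hs1); rewrite leqNgt Hlt.
    have g2 : load x2 e < sigma e m.
      by rewrite ltNge; apply/negP => /(proj2 Hs2); rewrite leqNgt Hlt.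
    move: Pm; rewrite leNgt => /negP; apply.
    have k1 : t * load x1 e <= t * sigma e m := ler_wpM2l t0 (ltW g1).
    have k2 : (1 - t) * load x2 e <= (1 - t) * sigma e m := ler_wpM2l t1' (ltW g2).
    case: (eqVneq t 0) => [-> | tnz].
      by rewrite subr0 !mul0r add0r mul1r.
    have k3 : t * load x1 e < t * sigma e m.
      by rewrite ltr_pM2l // lt_def tnz t0.
    have -> : sigma e m = t * sigma e m + (1 - t) * sigma e m by ring.
    exact: ltr_leD.
  apply: Mm => /=.
  have -> : sigma e (ell e) = t * sigma e (ell e) + (1 - t) * sigma e (ell e) by ring.
  by apply: lerD; apply: ler_wpM2l => //; [exact: (proj1 Hs1) | exact: (proj1 Hs2)].
pose c1 := edge_costs K sigma a b g l1 x1.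
pose c2 := edge_costs K sigma a b g l2 x2.
have Hcost : edge_costs K sigma a b g lam x = fun e => t * c1 e + (1 - t) * c2 e.
  apply: functional_extensionality => e.
  rewrite /c1 /c2 /edge_costs /cost Hpiece Hload -P1 -P2 /lam; ring.
have Hc1 e : 0 <= c1 e.
  rewrite /c1 /edge_costs /cost; apply: addr_ge0; [apply: addr_ge0|].
  - by apply: mulr_ge0 => //; apply: ltW; apply: ha; apply: leq_ord.
  - by apply: hb; apply: leq_ord.
  - by apply: mulr_ge0.
have Hc2 e : 0 <= c2 e.
  rewrite /c2 /edge_costs /cost; apply: addr_ge0; [apply: addr_ge0|].
  - by apply: mulr_ge0 => //; apply: ltW; apply: ha; apply: leq_ord.
  - by apply: hb; apply: leq_ord.
  - by apply: mulr_ge0.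
have Heq i e : (i, e) \in S <-> tight tail head src K sigma a b g lam x i e.
  change ((i, e) \in S <-> tightc tail head (edge_costs K sigma a b g lam x) (src i) e).
  rewrite Hcost.
  have Himp f : tightc tail head c1 (src i) f -> tightc tail head c2 (src i) f.
    by move=> H; apply: (proj1 (S2 i f)); apply: (proj2 (S1 i f)).
  split.
    move=> Hin.
    have [rv1 [rw1 [A1 [B1 C1]]]] : tightc tail head c1 (src i) e := proj1 (S1 i e) Hin.
    have [rv2 [rw2 [A2 [B2 C2]]]] : tightc tail head c2 (src i) e := proj1 (S2 i e) Hin.
    exists (t * rv1 + (1 - t) * rv2), (t * rw1 + (1 - t) * rw2).
    split; first exact: dist_comb.
    split; first exact: dist_comb.
    by rewrite /= C1 C2; ring.
  move=> [rv [rw [Dv [Dw Ce]]]].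
  have [[pv [Hpv _]] _] := Dv.
  have [[pw [Hpw _]] _] := Dw.
  have [d1v D1v] := dist_exists (Hc1) Hpv.
  have [d2v D2v] := dist_exists (Hc2) Hpv.
  have [d1w D1w] := dist_exists (Hc1) Hpw.
  have [d2w D2w] := dist_exists (Hc2) Hpw.
  have Erv := dist_uniq Dv (dist_comb tt Hc2 Himp D1v D2v).
  have Erw := dist_uniq Dw (dist_comb tt Hc2 Himp D1w D2w).
  have T1 := dist_tri D1v D1w.
  have T2 := dist_tri D2v D2w.
  move: Ce => /=; rewrite Erv Erw => Ce.
  set A := d1v + c1 e - d1w.
  set B := d2v + c2 e - d2w.
  have A0 : 0 <= A by rewrite /A subr_ge0.
  have B0 : 0 <= B by rewrite /B subr_ge0.
  have hsum : t * A + (1 - t) * B = 0.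
    have -> : t * A + (1 - t) * B = (t * c1 e + (1 - t) * c2 e) -
       ((t * d1w + (1 - t) * d2w) - (t * d1v + (1 - t) * d2v)) by rewrite /A /B; ring.
    by rewrite Ce subrr.
  have hA : t * A = 0.
    apply/eqP; rewrite eq_le mulr_ge0 // andbT -hsum lerDl; exact: mulr_ge0.
  case: (eqVneq t 0) => [tz | tnz].
    move: hsum; rewrite tz subr0 mul1r mul0r add0r => hB.
    apply: (proj2 (S2 i e)); exists d2v, d2w; split => //; split => //.
    by move: hB; rewrite /B => hB; change (c2 e = d2w - d2v); lra.
  move: hA => /eqP; rewrite mulf_eq0 (negbTE tnz) /= => /eqP hA.
  apply: (proj2 (S1 i e)); exists d1v, d1w; split => //; split => //.
  by move: hA; rewrite /A => hA; change (c1 e = d1w - d1v); lra.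
split; first by apply: addr_ge0; apply: mulr_ge0.
exists x; split; last first.
  by split; [exact: Heq | move=> e; rewrite Hpiece].
split.
  split.
    by move=> i e; apply: addr_ge0; apply: mulr_ge0 => //; [apply: (proj1 F1) | apply: (proj1 F2)].
  move=> i v; have h1 := proj2 F1 i v; have h2 := proj2 F2 i v.
  rewrite /x !big_split /= -!mulr_sumr.
  set A1 := \sum_(e | tail e == v) x1 i e.
  set A2 := \sum_(e | tail e == v) x2 i e.
  set B1 := \sum_(e | head e == v) x1 i e.
  set B2 := \sum_(e | head e == v) x2 i e.
  have -> : t * A1 + (1 - t) * A2 - (t * B1 + (1 - t) * B2)
     = t * (A1 - B1) + (1 - t) * (A2 - B2) by ring.
  by rewrite h1 h2; ring.
move=> i e Hpos; apply/(proj1 (Heq i e)).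
case: (ltrP 0 (x1 i e)) => h1.
  by apply: (proj2 (S1 i e)); apply: W1.
case: (ltrP 0 (x2 i e)) => h2.
  by apply: (proj2 (S2 i e)); apply: W2.
have e1 : x1 i e = 0 by apply/eqP; rewrite eq_le h1 (proj1 F1).
have e2 : x2 i e = 0 by apply/eqP; rewrite eq_le h2 (proj1 F2).
by move: Hpos; rewrite /x e1 e2 !mulr0 addr0 ltxx.
Qed.
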